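(* Let $P : E \to B$ be a functor between finite categories which is both fibered in groupoids and cofibered in groupoids. Let $B = \coprod_i B_i$ be the decomposition of $B$ into connected components, and let $F_i$ be the fiber category $P^{-1}(b)$ over an object $b$ of $B_i$. If $E$ and each $B_i$ have Euler characteristics, then \[ \chi(E) = \sum_i \chi(B_i)\,\chi(F_i). \]
   Context: Matrices and Euler characteristic: for finite sets $I,J$ and $\zeta : I\times J \to \mathbb{Q}$, a weighting is $k^{\bullet} : J \to \mathbb{Q}$ with $\sum_j \zeta(i,j)k^j = 1$ for all $i$; a coweighting is $k_{\bullet} : I\to\mathbb{Q}$ with $\sum_i k_i\zeta(i,j)=1$ for all $j$. $\zeta$ has Euler characteristic if it has both, and then $|\zeta| = \sum_j k^j = \sum_i k_i$. A finite category $A$ has similarity matrix $\zeta_A(x,y) = \#A(x,y)$; $A$ has Euler characteristic if $\zeta_A$ does, and $\chi(A) = |\zeta_A|$. A morphism $f : e \to e'$ in $E$ is cartesian if for every $g : e'' \to e'$ and every $h : P(e'') \to P(e)$ with $P(f)\circ h = P(g)$ there is a unique $\tilde h : e'' \to e$ with $P(\tilde h) = h$ and $f\circ\tilde h = g$. $P$ is fibered in groupoids if every morphism of $E$ is cartesian and every morphism $f : b \to P(e)$ in $B$ has a lift $\tilde f : e' \to e$ with $P(\tilde f)=f$; cofibered in groupoids is the dual notion. The fiber category $P^{-1}(b)$ has objects $e$ with $P(e)=b$ and morphisms $f$ with $P(f)=\mathrm{id}_b$; over a connected component all fibers are equivalent. *)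

(* Defs.v *)
From HB Require Import structures.
From mathcomp Require Import all_boot all_order all_algebra.
Set Implicit Arguments. Unset Strict Implicit. Unset Printing Implicit Defensive.
Import Order.TTheory GRing.Theory Num.Theory.
Local Open Scope ring_scope.

(* Euler characteristic of a matrix zeta : I x J -> Q, where the index sets
   are given as finite subsets I of T and J of U.  [has_euler I J zeta c]
   means: zeta has a weighting and a coweighting, and |zeta| = c (the sum of
   the weighting, which equals the sum of any coweighting). *)
Definition is_weighting (T U : finType) (I : {set T}) (J : {set U})
  (zeta : T -> U -> rat) (k : U -> rat) : Prop :=
  forall i, i \in I -> \sum_(j in J) zeta i j * k j = 1.

Definition is_coweighting (T U : finType) (I : {set T}) (J : {set U})
  (zeta : T -> U -> rat) (k : T -> rat) : Prop :=
  forall j, j \in J -> \sum_(i in I) k i * zeta i j = 1.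

Definition has_euler (T U : finType) (I : {set T}) (J : {set U})
  (zeta : T -> U -> rat) (c : rat) : Prop :=
  (exists k : U -> rat, is_weighting I J zeta k /\ \sum_(j in J) k j = c) /\
  (exists k : T -> rat, is_coweighting I J zeta k).

(* A finite category, in one-sorted presentation: finite type of objects,
   finite type of all morphisms, domain/codomain, identities, composition
   ([comp f g] = f o g, meaningful when dom f = cod g). *)
Record fincat := FinCat {
  Obj : finType;
  Mor : finType;
  dom : Mor -> Obj;
  cod : Mor -> Obj;
  idm : Obj -> Mor;
  comp : Mor -> Mor -> Mor;
  dom_id : forall x, dom (idm x) = x;
  cod_id : forall x, cod (idm x) = x;
  dom_comp : forall f g, dom f = cod g -> dom (comp f g) = dom g;
  cod_comp : forall f g, dom f = cod g -> cod (comp f g) = cod f;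
  comp_id_l : forall f, comp (idm (cod f)) f = f;
  comp_id_r : forall f, comp f (idm (dom f)) = f;
  comp_assoc : forall f g h, dom f = cod g -> dom g = cod h ->
    comp f (comp g h) = comp (comp f g) h
}.

Definition homset (A : fincat) (x y : Obj A) : {set Mor A} :=
  [set f | (dom f == x) && (cod f == y)].

Definition zeta_cat (A : fincat) (x y : Obj A) : rat := (#|homset x y|)%:R.

Definition cat_euler (A : fincat) (c : rat) : Prop :=
  has_euler [set: Obj A] [set: Obj A] (@zeta_cat A) c.

Record functor (E B : fincat) := Functor {
  fobj : Obj E -> Obj B;
  fmor : Mor E -> Mor B;
  fmor_dom : forall f, dom (fmor f) = fobj (dom f);
  fmor_cod : forall f, cod (fmor f) = fobj (cod f);
  fmor_id : forall x, fmor (idm x) = idm (fobj x);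
  fmor_comp : forall f g, dom f = cod g -> fmor (comp f g) = comp (fmor f) (fmor g)
}.

Section Fib.
Variables (E B : fincat) (P : functor E B).

Definition cartesian (f : Mor E) : Prop :=
  forall (g : Mor E) (h : Mor B),
    cod g = cod f ->
    dom h = fobj P (dom g) -> cod h = fobj P (dom f) ->
    comp (fmor P f) h = fmor P g ->
    exists th : Mor E,
      [/\ dom th = dom g, cod th = dom f, fmor P th = h, comp f th = g &
        forall th' : Mor E, dom th' = dom g -> cod th' = dom f ->
          fmor P th' = h -> comp f th' = g -> th' = th].

Definition cocartesian (f : Mor E) : Prop :=
  forall (g : Mor E) (h : Mor B),
    dom g = dom f ->
    dom h = fobj P (cod f) -> cod h = fobj P (cod g) ->
    comp h (fmor P f) = fmor P g ->
    exists th : Mor E,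
      [/\ dom th = cod f, cod th = cod g, fmor P th = h, comp th f = g &
        forall th' : Mor E, dom th' = cod f -> cod th' = cod g ->
          fmor P th' = h -> comp th' f = g -> th' = th].

Definition fibered_in_groupoids : Prop :=
  (forall f : Mor E, cartesian f) /\
  (forall (e : Obj E) (f : Mor B), cod f = fobj P e ->
     exists tf : Mor E, cod tf = e /\ fmor P tf = f).

Definition cofibered_in_groupoids : Prop :=
  (forall f : Mor E, cocartesian f) /\
  (forall (e : Obj E) (f : Mor B), dom f = fobj P e ->
     exists tf : Mor E, dom tf = e /\ fmor P tf = f).

Definition fiber_obj (b : Obj B) : {set Obj E} := [set e | fobj P e == b].

Definition zeta_fiber (b : Obj B) (e e' : Obj E) : rat :=
  (#|[set f in homset e e' | fmor P f == idm b]|)%:R.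

End Fib.

Definition adjacent (B : fincat) : rel (Obj B) :=
  fun x y => [exists f : Mor B,
    ((dom f == x) && (cod f == y)) || ((dom f == y) && (cod f == x))].

Definition component (B : fincat) (b : Obj B) : {set Obj B} :=
  [set y | connect (@adjacent B) b y].

Definition components (B : fincat) : {set {set Obj B}} :=
  [set component b | b : Obj B].

(* chi(B_C) = c for the full subcategory on the component C *)
Definition component_euler (B : fincat) (C : {set Obj B}) (c : rat) : Prop :=
  has_euler C C (@zeta_cat B) c.

Definition fiber_euler (E B : fincat) (P : functor E B) (b : Obj B) (c : rat)
  : Prop := has_euler (fiber_obj P b) (fiber_obj P b) (zeta_fiber P b) c.

(* Main.v *)
From Pilot Require Import Defs.
From HB Require Import structures.
From mathcomp Require Import all_boot all_order all_algebra.
From Stdlib Require Import ClassicalEpsilon.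
Import Pilot.Defs.
Set Implicit Arguments. Unset Strict Implicit.
Import Order.TTheory GRing.Theory Num.Theory.
Local Open Scope ring_scope.

Lemma comp_idl_gen (A : fincat) (f : Mor A) y : cod f = y -> comp (idm y) f = f.
Proof. by move=> <-; rewrite comp_id_l. Qed.
Lemma comp_idr_gen (A : fincat) (f : Mor A) y : dom f = y -> comp f (idm y) = f.
Proof. by move=> <-; rewrite comp_id_r. Qed.

Lemma idm_idm (A : fincat) (b : Obj A) : comp (idm b) (idm b) = idm b.
Proof. by apply: comp_idl_gen; rewrite cod_id. Qed.

Lemma fiber_dom (E B : fincat) (P : functor E B) f b :
  fmor P f = idm b -> fobj P (dom f) = b.
Proof. by move=> h; rewrite -fmor_dom h dom_id. Qed.
Lemma fiber_cod (E B : fincat) (P : functor E B) f b :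
  fmor P f = idm b -> fobj P (cod f) = b.
Proof. by move=> h; rewrite -fmor_cod h cod_id. Qed.

Lemma fiber_inv (E B : fincat) (P : functor E B)
  (hfib : fibered_in_groupoids P) (hcofib : cofibered_in_groupoids P)
  (f : Mor E) b : fmor P f = idm b ->
  exists g, [/\ dom g = cod f, cod g = dom f, fmor P g = idm b,
     comp f g = idm (cod f) & comp g f = idm (dom f)].
Proof.
move=> hf.
have hd := fiber_dom hf; have hc := fiber_cod hf.
have [th [th1 th2 th3 th4 _]] := hfib.1 f (idm (cod f)) (idm b)
  (cod_id _) ltac:(by rewrite dom_id dom_id hc) ltac:(by rewrite cod_id hd)
  ltac:(by rewrite hf idm_idm fmor_id hc).
have [th' [th1' th2' th3' th4' _]] := hcofib.1 f (idm (dom f)) (idm b)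
  (dom_id _) ltac:(by rewrite dom_id hc) ltac:(by rewrite cod_id cod_id hd)
  ltac:(by rewrite hf idm_idm fmor_id hd).
rewrite dom_id in th1; rewrite cod_id in th2'.
have e : th = th'.
  rewrite -[th'](comp_idr_gen (y := cod f)) // -th4 comp_assoc //.
  - by rewrite th4' comp_idl_gen.
by exists th; split => //; rewrite e.
Qed.

Definition outM (E B : fincat) (P : functor E B) (x : Obj E) : {set Mor E} :=
  [set f | (dom f == x) && (fmor P f == idm (fobj P x))].
Definition inM (E B : fincat) (P : functor E B) (x : Obj E) : {set Mor E} :=
  [set f | (cod f == x) && (fmor P f == idm (fobj P x))].
Definition fh (E B : fincat) (P : functor E B) b (x y : Obj E) : {set Mor E} :=
  [set f in homset x y | fmor P f == idm b].

Lemma out_le (E B : fincat) (P : functor E B)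
  (hfib : fibered_in_groupoids P) (hcofib : cofibered_in_groupoids P)
  (f : Mor E) b : fmor P f = idm b ->
  (#|outM P (cod f)| <= #|outM P (dom f)|)%N /\
  (#|inM P (dom f)| <= #|inM P (cod f)|)%N.
Proof.
move=> hf.
have hd := fiber_dom hf; have hc := fiber_cod hf.
have [g [g1 g2 g3 g4 g5]] := fiber_inv hfib hcofib hf.
split.
- have inj : {in outM P (cod f) &, injective (fun h => comp h f)}.
    move=> h1 h2; rewrite !inE => /andP[/eqP d1 _] /andP[/eqP d2 _] e.
    rewrite -(comp_idr_gen (f := h1) (y := cod f)) //.
    rewrite -(comp_idr_gen (f := h2) (y := cod f)) // -g4.
    by rewrite !comp_assoc ?e ?g2.
  rewrite -(card_in_imset inj); apply: subset_leq_card.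
  apply/subsetP => _ /imsetP[h hh ->]; move: hh; rewrite !inE.
  case/andP=> /eqP dh /eqP ph.
  rewrite dom_comp // fmor_comp // ph hf hc hd idm_idm !eqxx.
  done.
- have inj : {in inM P (dom f) &, injective (fun h => comp f h)}.
    move=> h1 h2; rewrite !inE => /andP[/eqP d1 _] /andP[/eqP d2 _] e.
    rewrite -(comp_idl_gen (f := h1) (y := dom f)) //.
    rewrite -(comp_idl_gen (f := h2) (y := dom f)) // -g5.
    by rewrite -!comp_assoc ?e ?g1.
  rewrite -(card_in_imset inj); apply: subset_leq_card.
  apply/subsetP => _ /imsetP[h hh ->]; move: hh; rewrite !inE.
  case/andP=> /eqP dh /eqP ph.
  rewrite cod_comp // fmor_comp // ph hf hc hd idm_idm !eqxx.
  done.
Qed.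

Lemma out_eq (E B : fincat) (P : functor E B)
  (hfib : fibered_in_groupoids P) (hcofib : cofibered_in_groupoids P)
  (f : Mor E) b : fmor P f = idm b ->
  #|outM P (dom f)| = #|outM P (cod f)| /\ #|inM P (dom f)| = #|inM P (cod f)|.
Proof.
move=> hf.
have [g [g1 g2 g3 _ _]] := fiber_inv hfib hcofib hf.
have [a1 a2] := out_le hfib hcofib hf.
have [b1 b2] := out_le hfib hcofib g3.
rewrite g1 g2 in b1 b2.
by split; apply/eqP; rewrite eqn_leq ?a1 ?a2 ?b1 ?b2.
Qed.

Definition wt (E B : fincat) (P : functor E B) (x : Obj E) : rat :=
  (#|outM P x|%:R)^-1.
Definition wt' (E B : fincat) (P : functor E B) (x : Obj E) : rat :=
  (#|inM P x|%:R)^-1.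

Lemma out_card (E B : fincat) (P : functor E B) b x : fobj P x = b ->
  #|outM P x| = (\sum_(y in fiber_obj P b) #|fh P b x y|)%N.
Proof.
move=> hx; rewrite -sum1_card (partition_big (fun f => cod f) (mem (fiber_obj P b))) /=.
  apply: eq_bigr => y _; rewrite -sum1_card; apply: eq_bigl => f.
  by rewrite !inE hx; do !case: eqP.
move=> f; rewrite !inE => /andP[_ /eqP h].
by rewrite -fmor_cod h cod_id hx.
Qed.

Lemma in_card (E B : fincat) (P : functor E B) b y : fobj P y = b ->
  #|inM P y| = (\sum_(x in fiber_obj P b) #|fh P b x y|)%N.
Proof.
move=> hy; rewrite -sum1_card (partition_big (fun f => dom f) (mem (fiber_obj P b))) /=.
  apply: eq_bigr => x _; rewrite -sum1_card; apply: eq_bigl => f.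
  by rewrite !inE hy; do !case: eqP.
move=> f; rewrite !inE => /andP[_ /eqP h].
by rewrite -fmor_dom h dom_id hy.
Qed.

Lemma out_pos (E B : fincat) (P : functor E B) x : (0 < #|outM P x|)%N.
Proof. by apply/card_gt0P; exists (idm x); rewrite !inE dom_id fmor_id !eqxx. Qed.
Lemma in_pos (E B : fincat) (P : functor E B) x : (0 < #|inM P x|)%N.
Proof. by apply/card_gt0P; exists (idm x); rewrite !inE cod_id fmor_id !eqxx. Qed.

Lemma fib_weight (E B : fincat) (P : functor E B)
  (hfib : fibered_in_groupoids P) (hcofib : cofibered_in_groupoids P) b :
  is_weighting (fiber_obj P b) (fiber_obj P b) (zeta_fiber P b) (wt P).
Proof.
move=> x; rewrite inE => /eqP hx.
rewrite (eq_bigr (fun y => (#|fh P b x y|%:R * wt P x))).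
  rewrite -big_distrl /= -natr_sum -out_card // /wt mulfV //.
  by rewrite pnatr_eq0 -lt0n out_pos.
move=> y _; rewrite /zeta_fiber -/(fh P b x y).
case: (set_0Vmem (fh P b x y)) => [-> | [f]]; first by rewrite cards0 !mul0r.
rewrite !inE => /andP[/andP[/eqP d /eqP c] /eqP hf].
have [e _] := out_eq hfib hcofib hf.
by rewrite /wt -c -d e.
Qed.

Lemma fib_coweight (E B : fincat) (P : functor E B)
  (hfib : fibered_in_groupoids P) (hcofib : cofibered_in_groupoids P) b :
  is_coweighting (fiber_obj P b) (fiber_obj P b) (zeta_fiber P b) (wt' P).
Proof.
move=> y; rewrite inE => /eqP hy.
rewrite (eq_bigr (fun x => (wt' P y * #|fh P b x y|%:R))).
  rewrite -big_distrr /= -natr_sum -in_card // /wt' mulVf //.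
  by rewrite pnatr_eq0 -lt0n in_pos.
move=> x _; rewrite /zeta_fiber -/(fh P b x y).
case: (set_0Vmem (fh P b x y)) => [-> | [f]]; first by rewrite cards0 !mulr0.
rewrite !inE => /andP[/andP[/eqP d /eqP c] /eqP hf].
have [_ e] := out_eq hfib hcofib hf.
by rewrite /wt' -c -d e.
Qed.

Definition NM (E B : fincat) (P : functor E B) (h : Mor B) (x y : Obj E) : {set Mor E} :=
  [set f in homset x y | fmor P f == h].

Lemma N_cocart (E B : fincat) (P : functor E B)
  (hcofib : cofibered_in_groupoids P) (h : Mor B) (e : Obj E) :
  dom h = fobj P e -> exists e1, fobj P e1 = cod h /\
   forall e', fobj P e' = cod h -> #|NM P h e e'| = #|fh P (cod h) e1 e'|.
Proof.
move=> hd.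
have [phi [p1 p2]] := hcofib.2 e h hd.
have pc : fobj P (cod phi) = cod h by rewrite -fmor_cod p2.
exists (cod phi); split => // e' he'.
have inj : {in fh P (cod h) (cod phi) e' &, injective (fun th => comp th phi)}.
  move=> t1 t2; rewrite !inE => /andP[/andP[/eqP d1 /eqP c1] /eqP q1]
     /andP[/andP[/eqP d2 /eqP c2] /eqP q2] eq12.
  have [t0 [_ _ _ _ u]] := hcofib.1 phi (comp t1 phi) (idm (cod h))
    ltac:(by rewrite dom_comp) ltac:(by rewrite dom_id pc)
    ltac:(by rewrite cod_id cod_comp // c1 he')
    ltac:(by rewrite fmor_comp // q1 p2).
  have cc : cod (comp t1 phi) = e' by rewrite cod_comp.
  by rewrite (u t1 d1 _ q1 erefl) ?cc // (u t2 d2 _ q2 (esym eq12)) ?cc.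
rewrite -(card_in_imset inj); apply/esym/eq_card => f.
apply/imsetP/idP.
- case=> th; rewrite !inE => /andP[/andP[/eqP d1 /eqP c1] /eqP q1] ->.
  rewrite ?inE dom_comp // cod_comp // p1 c1 fmor_comp // q1 p2 comp_idl_gen //.
  by rewrite !eqxx.
- rewrite !inE => /andP[/andP[/eqP d /eqP c] /eqP q].
  have [t0 [t1 t2 t3 t4 _]] := hcofib.1 phi f (idm (cod h))
    ltac:(by rewrite d) ltac:(by rewrite dom_id pc)
    ltac:(by rewrite cod_id c he')
    ltac:(by rewrite p2 q comp_idl_gen).
  exists t0; last by rewrite t4.
  by rewrite !inE t1 t2 t3 c !eqxx.
Qed.

Lemma N_cart (E B : fincat) (P : functor E B)
  (hfib : fibered_in_groupoids P) (h : Mor B) (e' : Obj E) :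
  cod h = fobj P e' -> exists e2, fobj P e2 = dom h /\
   forall e, fobj P e = dom h -> #|NM P h e e'| = #|fh P (dom h) e e2|.
Proof.
move=> hc.
have [psi [p1 p2]] := hfib.2 e' h hc.
have pd : fobj P (dom psi) = dom h by rewrite -fmor_dom p2.
exists (dom psi); split => // e he.
have inj : {in fh P (dom h) e (dom psi) &, injective (fun th => comp psi th)}.
  move=> t1 t2; rewrite !inE => /andP[/andP[/eqP d1 /eqP c1] /eqP q1]
     /andP[/andP[/eqP d2 /eqP c2] /eqP q2] eq12.
  have [t0 [_ _ _ _ u]] := hfib.1 psi (comp psi t1) (idm (dom h))
    ltac:(by rewrite cod_comp) ltac:(by rewrite dom_id dom_comp // d1 he)
    ltac:(by rewrite cod_id pd)
    ltac:(by rewrite fmor_comp // q1 p2).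
  have cc : dom (comp psi t1) = e by rewrite dom_comp.
  by rewrite (u t1 _ c1 q1 erefl) ?cc // (u t2 _ c2 q2 (esym eq12)) ?cc.
rewrite -(card_in_imset inj); apply/esym/eq_card => f.
apply/imsetP/idP.
- case=> th; rewrite !inE => /andP[/andP[/eqP d1 /eqP c1] /eqP q1] ->.
  rewrite ?inE dom_comp // cod_comp // p1 d1 fmor_comp // q1 p2 comp_idr_gen //.
  by rewrite !eqxx.
- rewrite !inE => /andP[/andP[/eqP d /eqP c] /eqP q].
  have [t0 [t1 t2 t3 t4 _]] := hfib.1 psi f (idm (dom h))
    ltac:(by rewrite c) ltac:(by rewrite dom_id d he)
    ltac:(by rewrite cod_id pd)
    ltac:(by rewrite p2 q comp_idr_gen).
  exists t0; last by rewrite t4.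
  by rewrite !inE t1 t2 t3 d !eqxx.
Qed.

Lemma weight_sum (T U : finType) (I : {set T}) (J : {set U}) z k c :
  is_weighting I J z k -> is_coweighting I J z c ->
  \sum_(j in J) k j = \sum_(i in I) c i.
Proof.
move=> hk hc.
rewrite (eq_bigr (fun j => (\sum_(i in I) c i * z i j) * k j)); last first.
  by move=> j hj; rewrite hc // mul1r.
under eq_bigr do rewrite big_distrl /=.
rewrite exchange_big /=; apply: eq_bigr => i hi.
by under eq_bigr do rewrite -mulrA; rewrite -big_distrr /= hk // mulr1.
Qed.

Definition sigma (E B : fincat) (P : functor E B) (b : Obj B) : rat :=
  \sum_(e in fiber_obj P b) wt P e.

Lemma sigma_hom (E B : fincat) (P : functor E B)
  (hfib : fibered_in_groupoids P) (hcofib : cofibered_in_groupoids P)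
  (h : Mor B) : sigma P (dom h) = sigma P (cod h).
Proof.
pose T := \sum_(e in fiber_obj P (dom h)) \sum_(e' in fiber_obj P (cod h))
   (wt' P e * (#|NM P h e e'|%:R) * wt P e').
have -> : sigma P (dom h) = T.
  rewrite /sigma (weight_sum (fib_weight hfib hcofib (b := dom h)) (fib_coweight hfib hcofib (b := dom h))).
  apply: eq_bigr => e; rewrite inE => /eqP he.
  under eq_bigr do rewrite -mulrA; rewrite -big_distrr /=.
  have [e1 [h1 h2]] := N_cocart hcofib (esym he).
  rewrite (eq_bigr (fun e' => zeta_fiber P (cod h) e1 e' * wt P e')).
    by rewrite (fib_weight hfib hcofib) ?mulr1 // inE h1.
  by move=> e'; rewrite inE => /eqP he'; rewrite h2.
rewrite /T exchange_big /sigma /=; apply: eq_bigr => e'; rewrite inE => /eqP he'.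
rewrite -big_distrl /=.
have [e2 [h1 h2]] := N_cart hfib (esym he').
rewrite (eq_bigr (fun e => wt' P e * zeta_fiber P (dom h) e e2)).
  by rewrite (fib_coweight hfib hcofib) ?mul1r // inE h1.
by move=> e; rewrite inE => /eqP he; rewrite h2.
Qed.

Lemma hom_split (E B : fincat) (P : functor E B) (x y : Obj E) :
  #|homset x y| = (\sum_(h in homset (fobj P x) (fobj P y)) #|NM P h x y|)%N.
Proof.
rewrite -sum1_card (partition_big (fmor P) (mem (homset (fobj P x) (fobj P y)))) /=.
  by apply: eq_bigr => h _; rewrite -sum1_card; apply: eq_bigl => f; rewrite !inE.
move=> f; rewrite !inE => /andP[/eqP d /eqP c].
by rewrite fmor_dom fmor_cod d c !eqxx.
Qed.

Lemma E_weight (E B : fincat) (P : functor E B)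
  (hfib : fibered_in_groupoids P) (hcofib : cofibered_in_groupoids P)
  (kB : Obj B -> rat) :
  is_weighting [set: Obj B] [set: Obj B] (@zeta_cat B) kB ->
  is_weighting [set: Obj E] [set: Obj E] (@zeta_cat E)
    (fun e => kB (fobj P e) * wt P e).
Proof.
move=> hkB x _.
rewrite -(hkB (fobj P x)) ?in_setT //.
rewrite (partition_big (fobj P) (mem [set: Obj B])) /=; last by move=> *; rewrite in_setT.
apply: eq_bigr => b _.
rewrite (eq_bigr (fun e => \sum_(h in homset (fobj P x) b)
    (kB b * (#|NM P h x e|%:R * wt P e)))); last first.
  move=> e /andP[_ /eqP <-].
  rewrite /zeta_cat (hom_split P) natr_sum big_distrl /=.
  by apply: eq_bigr => h _; rewrite mulrCA.
rewrite (eq_bigl (fun e => e \in fiber_obj P b)); last by move=> e; rewrite !inE.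
rewrite exchange_big /=.
rewrite (eq_bigr (fun h => kB b)).
  by rewrite sumr_const /zeta_cat mulr_natl.
move=> h; rewrite inE => /andP[/eqP d /eqP c].
rewrite -big_distrr /=.
have [e1 [h1 h2]] := N_cocart hcofib d.
rewrite (eq_bigr (fun e' => zeta_fiber P b e1 e' * wt P e')).
  by rewrite (fib_weight hfib hcofib) ?mulr1 // inE h1 c.
by move=> e'; rewrite inE => /eqP he'; rewrite h2 ?c // he' c.
Qed.

Lemma E_sum (E B : fincat) (P : functor E B) (kB : Obj B -> rat) :
  \sum_(e in [set: Obj E]) kB (fobj P e) * wt P e =
  \sum_(b in [set: Obj B]) kB b * sigma P b.
Proof.
rewrite (partition_big (fobj P) (mem [set: Obj B])) /=; last by move=> *; rewrite in_setT.
apply: eq_bigr => b _; rewrite /sigma big_distrr /=.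
rewrite (eq_bigl (fun e => e \in fiber_obj P b)); last by move=> e; rewrite !inE.
by apply: eq_bigr => e; rewrite inE => /eqP ->.
Qed.

Lemma adj_sym (B : fincat) : symmetric (@adjacent B).
Proof.
move=> x y; rewrite /adjacent; apply/existsP/existsP => [][f hf]; exists f;
  by rewrite orbC.
Qed.

Lemma comp_self (B : fincat) (b : Obj B) : b \in component b.
Proof. by rewrite inE connect0. Qed.

Lemma comp_eq (B : fincat) (x y : Obj B) : y \in component x -> component y = component x.
Proof.
rewrite inE => hxy; apply/setP => z; rewrite !inE.
have hs := sym_connect_sym (@adj_sym B).
by rewrite (same_connect hs hxy) // connect_sym.
Qed.

Lemma hom_comp (B : fincat) (f : Mor B) : cod f \in component (dom f).
Proof.
rewrite inE; apply: connect1; apply/existsP; exists f; by rewrite !eqxx.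
Qed.

Lemma sigma_conn (E B : fincat) (P : functor E B)
  (hfib : fibered_in_groupoids P) (hcofib : cofibered_in_groupoids P)
  (x y : Obj B) : connect (@adjacent B) x y -> sigma P x = sigma P y.
Proof.
case/connectP => p; elim: p x => [|z p IH] x /=; first by move=> _ ->.
case/andP => /existsP[f hf] pp ey; rewrite -(IH z pp ey).
case/orP: hf => /andP[/eqP d /eqP c].
- by rewrite -d -c sigma_hom.
- by rewrite -d -c sigma_hom.
Qed.

Unset Implicit Arguments.

Theorem corollary2p10 (E B : fincat) (P : functor E B)
  (hfib : fibered_in_groupoids P) (hcofib : cofibered_in_groupoids P)
  (chiE : rat) (chiB : {set Obj B} -> rat)
  (hE : cat_euler E chiE)
  (hB : forall C, C \in components B -> component_euler C (chiB C))
  (rep : {set Obj B} -> Obj B)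
  (hrep : forall C, C \in components B -> rep C \in C) :
  exists chiF : {set Obj B} -> rat,
    (forall C, C \in components B -> fiber_euler P (rep C) (chiF C)) /\
    chiE = \sum_(C in components B) chiB C * chiF C.
Proof.
have hB' : forall C, exists k : Obj B -> rat, C \in components B ->
    is_weighting C C (@zeta_cat B) k /\ \sum_(j in C) k j = chiB C.
  move=> C; case: (boolP (C \in components B)) => hC; last by exists (fun _ => 0).
  by have [[k hk] _] := hB C hC; exists k.
pose kC C := proj1_sig (constructive_indefinite_description _ (hB' C)).
have hkC : forall C, C \in components B ->
    is_weighting C C (@zeta_cat B) (kC C) /\ \sum_(j in C) kC C j = chiB C.
  by move=> C; exact: (proj2_sig (constructive_indefinite_description _ (hB' C))).
have compin : forall b, component b \in components B.
  by move=> b; apply/imsetP; exists b.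
pose kB b := kC (component b) b.
have wB : is_weighting [set: Obj B] [set: Obj B] (@zeta_cat B) kB.
  move=> x _.
  rewrite -((hkC _ (compin x)).1 x (comp_self x)).
  rewrite big_mkcond [RHS]big_mkcond; apply: eq_bigr => y _.
  rewrite in_setT; case: ifP => hy.
    by rewrite /kB (comp_eq hy).
  case: (set_0Vmem (homset x y)) => [e0|[f hf]].
    by rewrite /zeta_cat e0 cards0 mul0r.
  move: hf; rewrite inE => /andP[/eqP d /eqP c].
  by move: (hom_comp f); rewrite d c hy.
exists (fun C => sigma P (rep C)); split.
  move=> C hC; split; last by exists (wt' P); exact: fib_coweight.
  by exists (wt P); split => //; exact: fib_weight.
have [[k0 [hk0 s0]] [c hc]] := hE.
rewrite -s0 (weight_sum hk0 hc) -(weight_sum (E_weight hfib hcofib wB) hc).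
rewrite E_sum.
rewrite (partition_big (@component B) (mem (components B))) /=; last by move=> *.
apply: eq_bigr => C hC.
have [b0 _ eC] := imsetP hC.
rewrite (eq_bigl (fun b => b \in C)); last first.
  move=> b; rewrite in_setT /= eC; apply/eqP/idP => [<-|hb]; first exact: comp_self.
  exact: comp_eq.
rewrite -(hkC C hC).2 big_distrl /=; apply: eq_bigr => b hb.
have hb' : component b = C by rewrite eC; apply: comp_eq; rewrite -eC.
rewrite /kB hb'; congr (_ * _).
have hr : rep C \in component b by rewrite hb' hrep.
apply: (sigma_conn hfib hcofib); by move: hr; rewrite inE.
Qed.
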